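(* Let $A>0$, $B>0$ and $0<v_{\mathrm{nozzle}}<1$. There exist $w>0$, $t_{\mathrm{end}}>0$ and $v\in C^1([0,t_{\mathrm{end}}])$ solving $$v'(t)=-v(t)^2\Big(\sqrt{A^2t^2+w}+v(t)\Big),\quad v(0)=1,\quad v(t_{\mathrm{end}})=v_{\mathrm{nozzle}},\quad \int_0^{t_{\mathrm{end}}}\frac{At\,v(t)}{\sqrt{A^2t^2+w}}\,dt=B$$ (equivalently, a curved-jet solution of the dimensionless model: $v(s),\Theta(s)$ on $[0,s_{\mathrm{end}}]$ with $(v+v'/v)'=-A\sin\Theta/v$, $\Theta'=-A\cos\Theta/(v(v+v'/v))$, $v(0)=1$, $v(s_{\mathrm{end}})=v_{\mathrm{nozzle}}$, $\Theta(0)=0$, $\int_0^{s_{\mathrm{end}}}\sin\Theta\,ds=B$, with $v+v'/v<0$, obtained via $ds=v\,dt$, $\sin\Theta=At/\sqrt{A^2t^2+w}$) if and only if $$I(0;A,v_{\mathrm{nozzle}})>B.$$ If such a solution exists, it is unique.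
   Context: For $A>0$ and $w\ge0$, $v(\cdot;w):[0,\infty)\to(0,1]$ denotes the unique solution of $v'=-v^2(\sqrt{A^2t^2+w}+v)$, $v(0)=1$; it is strictly decreasing in $t$ and tends to $0$ as $t\to\infty$. For $0<v_{\mathrm{nozzle}}<1$, $t_{\mathrm{end}}(w)>0$ is the unique time with $v(t_{\mathrm{end}}(w);w)=v_{\mathrm{nozzle}}$, and $$I(w)=I(w;A,v_{\mathrm{nozzle}})=\int_0^{t_{\mathrm{end}}(w)}\frac{At\,v(t;w)}{\sqrt{A^2t^2+w}}\,dt.$$ In particular $I(0;A,v_{\mathrm{nozzle}})=\int_0^{t_{\mathrm{end}}(0)}v(t;0)\,dt$. Here $A=g\mu/v_{\mathrm{belt}}^3$, $B=v_{\mathrm{belt}}L/\mu$, and $v_{\mathrm{nozzle}}$ is the ratio of nozzle velocity to belt velocity. *)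

(* Defs.v *)
From Stdlib Require Import Reals Lra ClassicalEpsilon.
From Coquelicot Require Import Coquelicot.
Open Scope R_scope.

Definition jet_rhs (A w t x : R) : R := - x ^ 2 * (sqrt (A ^ 2 * t ^ 2 + w) + x).

(* Since the right-hand side is continuous,
   this is exactly v in C^1([0,T]) solving the ODE (one-sided derivatives
   at the endpoints). *)
Definition ode_sol (A w T : R) (v : R -> R) : Prop :=
  (forall t, 0 < t < T -> is_derive v t (jet_rhs A w t (v t))) /\
  filterlim v (at_right 0) (locally (v 0)) /\
  filterlim v (at_left T) (locally (v T)).

Definition ode_sol_global (A w : R) (v : R -> R) : Prop :=
  (forall t, 0 < t -> is_derive v t (jet_rhs A w t (v t))) /\
  filterlim v (at_right 0) (locally (v 0)).

Definition vsol (A w : R) : R -> R :=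
  epsilon (inhabits (fun _ : R => 0))
    (fun v => ode_sol_global A w v /\ v 0 = 1).

Definition t_end (A w vn : R) : R :=
  epsilon (inhabits 0) (fun T => 0 < T /\ vsol A w T = vn).

Definition I_fun (A w vn : R) : R :=
  RInt (fun t => A * t * vsol A w t / sqrt (A ^ 2 * t ^ 2 + w)) 0 (t_end A w vn).

Definition I0 (A vn : R) : R := RInt (vsol A 0) 0 (t_end A 0 vn).

Definition bvp_sol (A B vn w T : R) (v : R -> R) : Prop :=
  0 < w /\ 0 < T /\ ode_sol A w T v /\ v 0 = 1 /\ v T = vn /\
  RInt (fun t => A * t * v t / sqrt (A ^ 2 * t ^ 2 + w)) 0 T = B.

(* Main.v *)
Require Import Defs.
From Stdlib Require Import Reals Lra Lia ClassicalEpsilon.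
From Coquelicot Require Import Coquelicot.
Open Scope R_scope.


Lemma lip_cont (f : R -> R) x L :
  0 <= L -> (forall y, Rabs (f y - f x) <= L * Rabs (y - x)) -> continuity_pt f x.
Proof.
  intros HL H eps Heps. exists (eps / (L + 1)). split.
  - apply Rdiv_lt_0_compat; lra.
  - intros y [_ Hy]. simpl in *. unfold R_dist in *.
    eapply Rle_lt_trans. apply H.
    apply Rle_lt_trans with (L * (eps / (L+1))).
    apply Rmult_le_compat_l; lra.
    apply Rlt_le_trans with ((L+1) * (eps/(L+1))).
    apply Rmult_lt_compat_r. apply Rdiv_lt_0_compat; lra. lra.
    right; field; lra.
Qed.

Lemma cpt_cont (f : R -> R) x : continuity_pt f x -> continuous f x.
Proof. intro H. now apply continuity_pt_filterlim. Qed.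

Lemma cont_cpt (f : R -> R) x : continuous f x -> continuity_pt f x.
Proof. intro H. now apply continuity_pt_filterlim. Qed.

Definition gcl (x : R) : R := / Rmax 1 x.

Lemma Rmax1_ge x : 1 <= Rmax 1 x.
Proof. apply Rmax_l. Qed.

Lemma gcl_pos x : 0 < gcl x /\ gcl x <= 1.
Proof.
  unfold gcl. pose proof (Rmax1_ge x). split.
  apply Rinv_0_lt_compat; lra.
  assert (/Rmax 1 x <= /1) by (apply Rinv_le_contravar; lra). rewrite Rinv_1 in H0. lra.
Qed.

Lemma Rmax1_lip x y : Rabs (Rmax 1 x - Rmax 1 y) <= Rabs (x - y).
Proof.
  unfold Rmax; destruct (Rle_dec 1 x), (Rle_dec 1 y); split_Rabs; lra.
Qed.

Lemma gcl_lip x y : Rabs (gcl x - gcl y) <= Rabs (x - y).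
Proof.
  unfold gcl. pose proof (Rmax1_ge x). pose proof (Rmax1_ge y).
  pose proof (Rmax1_lip x y).
  set (a := Rmax 1 x) in *. set (b := Rmax 1 y) in *.
  replace (/a - /b) with ((b - a) / (a * b)) by (field; lra).
  rewrite Rabs_div by nra. rewrite (Rabs_pos_eq (a*b)) by nra.
  apply Rle_trans with (Rabs (b - a)).
  - unfold Rdiv. rewrite <- (Rmult_1_r (Rabs (b-a))) at 2.
    apply Rmult_le_compat_l. apply Rabs_pos.
    assert (/(a*b) <= /1) by (apply Rinv_le_contravar; nra). rewrite Rinv_1 in H2. lra.
  - rewrite Rabs_minus_sym. lra.
Qed.

Lemma gcl_cont x : continuity_pt gcl x.
Proof.
  apply (lip_cont _ _ 1). lra. intro y. rewrite Rmult_1_l. apply gcl_lip.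
Qed.

Lemma gcl_eq x : 1 <= x -> gcl x = / x.
Proof. intro. unfold gcl. rewrite Rmax_right; lra. Qed.

Definition sw (A w t : R) : R := sqrt (A ^ 2 * t ^ 2 + Rmax 0 w).

Lemma sw_cont A w t : continuity_pt (sw A w) t.
Proof.
  unfold sw.
  apply (continuity_pt_comp (fun t => A ^ 2 * t ^ 2 + Rmax 0 w) sqrt).
  - reg.
  - apply continuity_pt_sqrt. pose proof (Rmax_l 0 w). nra.
Qed.

Lemma sqrt_diff_le a x y : 0 <= a -> 0 <= x -> 0 <= y ->
  Rabs (sqrt (a + x) - sqrt (a + y)) <= Rabs (sqrt x - sqrt y).
Proof.
  intros Ha Hx Hy.
  pose proof (sqrt_pos x). pose proof (sqrt_pos y).
  pose proof (sqrt_pos (a+x)). pose proof (sqrt_pos (a+y)).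
  pose proof (sqrt_sqrt x Hx). pose proof (sqrt_sqrt y Hy).
  pose proof (sqrt_sqrt (a+x) ltac:(lra)). pose proof (sqrt_sqrt (a+y) ltac:(lra)).
  assert (sqrt x <= sqrt (a+x)) by (apply sqrt_le_1_alt; lra).
  assert (sqrt y <= sqrt (a+y)) by (apply sqrt_le_1_alt; lra).
  set (p := sqrt x) in *. set (q := sqrt y) in *.
  set (P := sqrt (a+x)) in *. set (Q := sqrt (a+y)) in *.
  (* (P-Q)(P+Q) = x - y = (p-q)(p+q) *)
  assert (E : (P - Q) * (P + Q) = (p - q) * (p + q)) by nra.
  destruct (Req_dec (P+Q) 0).
  - assert (P = 0) by lra. assert (Q = 0) by lra.
    replace (P - Q) with 0 by lra. rewrite Rabs_R0. apply Rabs_pos.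
  - assert (HPQ : 0 < P + Q) by lra.
    assert (E2 : Rabs (P-Q) * (P+Q) = Rabs (p-q) * (p+q)).
    { rewrite <- (Rabs_pos_eq (P+Q)) by lra. rewrite <- (Rabs_pos_eq (p+q)) by lra.
      rewrite <- !Rabs_mult, E. reflexivity. }
    apply Rmult_le_reg_r with (P + Q); auto. rewrite E2.
    apply Rmult_le_compat_l. apply Rabs_pos. lra.
Qed.

Lemma sw_diff A w w' t :
  Rabs (sw A w t - sw A w' t) <= Rabs (sqrt (Rmax 0 w) - sqrt (Rmax 0 w')).
Proof.
  unfold sw. apply sqrt_diff_le. nra. apply Rmax_l. apply Rmax_l.
Qed.

Lemma sw_ge A w t : 0 <= A -> 0 <= t -> A * t <= sw A w t.
Proof.
  intros. unfold sw. rewrite <- (sqrt_square (A*t)) by nra.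
  apply sqrt_le_1_alt. pose proof (Rmax_l 0 w). nra.
Qed.

Lemma sw_ge_sqrtw A w t : sqrt (Rmax 0 w) <= sw A w t.
Proof. unfold sw. apply sqrt_le_1_alt.
  assert (0 <= A^2*t^2) by (apply Rmult_le_pos; apply pow2_ge_0). lra. Qed.

Lemma sw_pos A w t : 0 <= sw A w t.
Proof. apply sqrt_pos. Qed.

Lemma sw_le A w t : 0 <= A -> 0 <= t -> sw A w t <= A * t + sqrt (Rmax 0 w).
Proof.
  intros. unfold sw. pose proof (Rmax_l 0 w). pose proof (sqrt_pos (Rmax 0 w)).
  pose proof (sqrt_sqrt (Rmax 0 w) ltac:(lra)).
  rewrite <- (sqrt_square (A*t + sqrt (Rmax 0 w))) by nra.
  apply sqrt_le_1_alt. replace (A^2*t^2) with ((A*t)*(A*t)) by ring.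
  assert (0 <= A*t*sqrt (Rmax 0 w)) by (apply Rmult_le_pos; nra). nra.
Qed.

Lemma exRI (h : R -> R) a b : (forall x, continuity_pt h x) -> ex_RInt h a b.
Proof. intro H. apply (ex_RInt_continuous (V:=R_CompleteNormedModule)). intros. apply cpt_cont, H. Qed.

Lemma RInt_der (h : R -> R) x : (forall x, continuity_pt h x) ->
  is_derive (fun y => RInt h 0 y) x (h x).
Proof.
  intro H. apply (is_derive_RInt _ _ 0).
  - apply filter_forall. intro b. apply (RInt_correct (V:=R_CompleteNormedModule)). apply exRI; auto.
  - apply cpt_cont, H.
Qed.

Lemma RInt_cont (h : R -> R) x : (forall x, continuity_pt h x) ->
  continuity_pt (fun y => RInt h 0 y) x.
Proof.
  intro H. apply cont_cpt. apply (ex_derive_continuous (K:=R_AbsRing) (V:=R_NormedModule)).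
  eexists. apply RInt_der. auto.
Qed.

Fixpoint pic (A w : R) (n : nat) (t : R) : R :=
  match n with
  | O => 1
  | S m => 1 + RInt (fun u => sw A w u + gcl (pic A w m u)) 0 (Rabs t)
  end.

Lemma pic_cont A w n t : continuity_pt (pic A w n) t.
Proof.
  revert t. induction n as [|n IH]; intro t; simpl.
  - apply continuity_pt_const. intros ? ?; reflexivity.
  - apply continuity_pt_plus. apply continuity_pt_const. intros ? ?; reflexivity.
    apply (continuity_pt_comp Rabs (fun y => RInt _ 0 y)).
    apply Rcontinuity_abs.
    apply RInt_cont. intro x. apply continuity_pt_plus. apply sw_cont.
    apply (continuity_pt_comp (pic A w n) gcl). apply IH. apply gcl_cont.
Qed.

Lemma exp2_bounds x : 0 <= x -> x <= exp (2*x) /\ x * x <= exp (2*x).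
Proof.
  intro Hx. pose proof (exp_ineq1_le x). replace (2*x) with (x + x) by ring.
  rewrite exp_plus. split; nra.
Qed.

Lemma RInt_exp2 x : RInt (fun u => exp (2*u)) 0 x = (exp (2*x) - 1) / 2.
Proof.
  assert (H : is_RInt (fun u => exp (2*u)) 0 x (minus (exp (2*x)/2) (exp (2*0)/2))).
  { apply (is_RInt_derive (fun u => exp (2*u)/2)).
    - intros. auto_derive; auto. field.
    - intros. apply cpt_cont. apply (continuity_pt_comp (fun u => 2*u) exp).
      reg. apply derivable_continuous_pt, derivable_pt_exp. }
  apply (is_RInt_unique (V:=R_CompleteNormedModule)) in H. rewrite H. unfold minus, plus, opp. simpl.
  rewrite Rmult_0_r, exp_0. field.
Qed.

Lemma plus1m (a : R) : 1 + a - 1 = a.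
Proof. ring. Qed.

Lemma pic_S A w n t : pic A w (S n) t = 1 + RInt (fun u => sw A w u + gcl (pic A w n u)) 0 (Rabs t).
Proof. reflexivity. Qed.

Lemma plus1m2 (a b : R) : 1 + a - (1 + b) = a - b.
Proof. ring. Qed.

Lemma RInt_diff (f g : R -> R) a b : ex_RInt f a b -> ex_RInt g a b ->
  RInt f a b - RInt g a b = RInt (fun u => f u - g u) a b.
Proof.
  intros Hf Hg. symmetry. apply (RInt_minus (V:=R_CompleteNormedModule)); auto.
Qed.

Lemma RInt_scalR (f : R -> R) a b c : ex_RInt f a b ->
  RInt (fun u => c * f u) a b = c * RInt f a b.
Proof. intro H. apply (RInt_scal (V:=R_CompleteNormedModule)); auto. Qed.

Definition Kc (A w : R) : R := A + sqrt (Rmax 0 w) + 1.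

Lemma hn_cont A w n : forall x, continuity_pt (fun u => sw A w u + gcl (pic A w n u)) x.
Proof.
  intro x. apply continuity_pt_plus. apply sw_cont.
  apply (continuity_pt_comp (pic A w n) gcl). apply pic_cont. apply gcl_cont.
Qed.

Lemma pic_diff A w (hA : 0 <= A) n t :
  Rabs (pic A w (S n) t - pic A w n t) <= Kc A w * exp (2 * Rabs t) * (/2)^n.
Proof.
  revert t. induction n as [|n IH]; intro t.
  - simpl pic. set (x := Rabs t). assert (Hx : 0 <= x) by apply Rabs_pos.
    rewrite plus1m.
    eapply Rle_trans. apply (abs_RInt_le_const _ _ _ (A * x + sqrt (Rmax 0 w) + 1)).
    + exact Hx.
    + apply exRI. intro u. apply continuity_pt_plus. apply sw_cont. apply continuity_pt_const. intros ? ?; reflexivity.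
    + intros u Hu. pose proof (sw_pos A w u). pose proof (sw_le A w u hA ltac:(lra)).
      pose proof (gcl_pos 1). rewrite Rabs_pos_eq by lra. nra.
    + destruct (exp2_bounds x Hx). unfold Kc. simpl. pose proof (sqrt_pos (Rmax 0 w)). nra.
  - rewrite (pic_S A w (S n)), (pic_S A w n).
    set (x := Rabs t). assert (Hx : 0 <= x) by apply Rabs_pos.
    rewrite plus1m2. rewrite RInt_diff by (apply exRI, hn_cont).
    eapply Rle_trans. apply abs_RInt_le. exact Hx.
    apply exRI. intro u. apply continuity_pt_minus; apply hn_cont.
    eapply Rle_trans. apply (RInt_le _ (fun u => (Kc A w * (/2)^n) * exp (2*u))). exact Hx.
    apply exRI. intro u. apply (continuity_pt_comp _ Rabs). apply continuity_pt_minus; apply hn_cont. apply Rcontinuity_abs.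
    apply exRI. intro u. apply continuity_pt_mult. apply continuity_pt_const. intros ? ?; reflexivity.
    apply (continuity_pt_comp (fun u => 2*u) exp). reg. apply derivable_continuous_pt, derivable_pt_exp.
    intros u Hu. replace (sw A w u + gcl (pic A w (S n) u) - (sw A w u + gcl (pic A w n u)))
      with (gcl (pic A w (S n) u) - gcl (pic A w n u)) by ring.
    eapply Rle_trans. apply gcl_lip. eapply Rle_trans. apply IH.
    rewrite (Rabs_pos_eq u) by lra. right; ring.
    rewrite RInt_scalR. rewrite RInt_exp2. simpl pow.
    assert (0 <= Kc A w) by (unfold Kc; pose proof (sqrt_pos (Rmax 0 w)); lra).
    assert (0 <= Kc A w * (/2)^n) by (apply Rmult_le_pos; auto; apply pow_le; lra).
    assert (0 < exp (2*x)) by apply exp_pos. nra.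
    apply exRI. intro u. apply (continuity_pt_comp (fun u => 2*u) exp). reg. apply derivable_continuous_pt, derivable_pt_exp.
Qed.

Lemma exp_mono x y : x <= y -> exp x <= exp y.
Proof. intro H. destruct (Req_dec x y). subst; lra. left; apply exp_increasing; lra. Qed.

Lemma half_pow_pos n : 0 < (/2)^n.
Proof. apply pow_lt; lra. Qed.

Lemma Kc_pos A w : 0 <= A -> 0 < Kc A w.
Proof. intro. unfold Kc. pose proof (sqrt_pos (Rmax 0 w)). lra. Qed.

Lemma pic_cauchy0 A w (hA : 0 <= A) n k t :
  Rabs (pic A w (n + k) t - pic A w n t) <=
  2 * (Kc A w * exp (2 * Rabs t)) * (/2)^n * (1 - (/2)^k).
Proof.
  induction k as [|k IH].
  - rewrite Nat.add_0_r. unfold Rminus. rewrite Rplus_opp_r, Rabs_R0. simpl. lra.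
  - rewrite Nat.add_succ_r.
    replace (pic A w (S (n + k)) t - pic A w n t) with
      ((pic A w (S (n + k)) t - pic A w (n+k) t) + (pic A w (n+k) t - pic A w n t)) by ring.
    eapply Rle_trans. apply Rabs_triang.
    pose proof (pic_diff A w hA (n+k) t). rewrite pow_add in H. simpl pow.
    nra.
Qed.

Lemma pic_cauchy A w (hA : 0 <= A) n m t : (n <= m)%nat ->
  Rabs (pic A w m t - pic A w n t) <= 2 * (Kc A w * exp (2 * Rabs t)) * (/2)^n.
Proof.
  intro H. replace m with (n + (m - n))%nat by lia.
  eapply Rle_trans. apply pic_cauchy0; auto.
  pose proof (half_pow_pos (m-n)). pose proof (half_pow_pos n).
  pose proof (Kc_pos A w hA). pose proof (exp_pos (2 * Rabs t)).
  assert (0 <= 2 * (Kc A w * exp (2 * Rabs t)) * (/2)^n).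
  { apply Rmult_le_pos. nra. lra. }
  nra.
Qed.

Lemma pic_exlim A w (hA : 0 <= A) t : ex_finite_lim_seq (fun n => pic A w n t).
Proof.
  apply ex_lim_seq_cauchy_corr. intro eps.
  set (E := 2 * (Kc A w * exp (2 * Rabs t))).
  assert (HE : 0 < E) by (unfold E; pose proof (Kc_pos A w hA); pose proof (exp_pos (2*Rabs t)); nra).
  destruct (pow_lt_1_zero (/2) ltac:(rewrite Rabs_pos_eq; lra) (eps / E)) as [N HN].
  { apply Rdiv_lt_0_compat. apply cond_pos. lra. }
  exists N. intros n m Hn Hm.
  assert (Hb : forall k, (N <= k)%nat -> E * (/2)^k < eps).
  { intros k Hk. specialize (HN k Hk). rewrite Rabs_pos_eq in HN by (left; apply half_pow_pos).
    apply Rmult_lt_compat_l with (r := E) in HN; auto.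
    replace (E * (eps / E)) with (pos eps) in HN by (field; lra). lra. }
  destruct (Nat.le_ge_cases n m).
  - rewrite Rabs_minus_sym. eapply Rle_lt_trans. apply pic_cauchy; auto. apply Hb; auto.
  - eapply Rle_lt_trans. apply pic_cauchy; auto. apply Hb; auto.
Qed.

Definition Uf (A w t : R) : R := real (Lim_seq (fun n => pic A w n t)).

Lemma Uf_lim A w (hA : 0 <= A) t : is_lim_seq (fun n => pic A w n t) (Uf A w t).
Proof.
  unfold Uf. pose proof (pic_exlim A w hA t) as H.
  destruct H as [l Hl]. rewrite (is_lim_seq_unique _ _ Hl). simpl. exact Hl.
Qed.

Lemma Uf_approx A w (hA : 0 <= A) n t :
  Rabs (Uf A w t - pic A w n t) <= 2 * (Kc A w * exp (2 * Rabs t)) * (/2)^n.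
Proof.
  assert (H1 : is_lim_seq (fun m => Rabs (pic A w (m + n) t - pic A w n t))
                 (Rabs (Uf A w t - pic A w n t))).
  { apply (is_lim_seq_abs _ (Finite _)).
    apply is_lim_seq_minus'. apply (is_lim_seq_incr_n (fun m => pic A w m t)).
    apply Uf_lim; auto. apply is_lim_seq_const. }
  assert (H2 := is_lim_seq_le _ _ _ _
    (fun m => pic_cauchy A w hA n (m + n) t ltac:(lia)) H1 (is_lim_seq_const _)).
  exact H2.
Qed.

Lemma Uf_cont A w (hA : 0 <= A) t : continuity_pt (Uf A w) t.
Proof.
  intros eps Heps.
  set (E := 2 * (Kc A w * exp (2 * (Rabs t + 1)))).
  assert (HE : 0 < E) by (unfold E; pose proof (Kc_pos A w hA); pose proof (exp_pos (2*(Rabs t+1))); nra).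
  destruct (pow_lt_1_zero (/2) ltac:(rewrite Rabs_pos_eq; lra) (eps / 3 / E)) as [N HN].
  { apply Rdiv_lt_0_compat; lra. }
  specialize (HN N (le_n N)). rewrite Rabs_pos_eq in HN by (left; apply half_pow_pos).
  assert (HN' : E * (/2)^N < eps/3).
  { apply Rmult_lt_compat_l with (r := E) in HN; auto.
    replace (E * (eps / 3 / E)) with (eps/3) in HN by (field; lra). lra. }
  destruct (pic_cont A w N t (eps/3) ltac:(lra)) as [d [Hd Hc]].
  exists (Rmin d 1). split. apply Rmin_pos; lra.
  intros y [Hdx Hy]. simpl in *. unfold R_dist in *.
  assert (Hy1 : Rabs (y - t) < d) by (pose proof (Rmin_l d 1); lra).
  assert (Hy2 : Rabs y <= Rabs t + 1).
  { pose proof (Rmin_r d 1). pose proof (Rabs_triang_inv y t). lra. }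
  assert (B : forall z, Rabs z <= Rabs t + 1 -> Rabs (Uf A w z - pic A w N z) < eps/3).
  { intros z Hz. eapply Rle_lt_trans. apply Uf_approx; auto.
    eapply Rle_lt_trans. 2: exact HN'. unfold E.
    pose proof (Kc_pos A w hA). pose proof (half_pow_pos N).
    assert (exp (2 * Rabs z) <= exp (2 * (Rabs t + 1))) by (apply exp_mono; lra).
    apply Rmult_le_compat_r. lra. nra. }
  assert (Ht : Rabs t <= Rabs t + 1) by lra.
  specialize (Hc y ltac:(split; [exact Hdx| exact Hy1])). simpl in Hc. unfold R_dist in Hc.
  pose proof (B y Hy2). pose proof (B t Ht).
  replace (Uf A w y - Uf A w t) with ((Uf A w y - pic A w N y) + (pic A w N y - pic A w N t)
     - (Uf A w t - pic A w N t)) by ring.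
  eapply Rle_lt_trans. apply Rabs_triang. rewrite Rabs_Ropp.
  eapply Rle_lt_trans. apply Rplus_le_compat_r. apply Rabs_triang. lra.
Qed.

Lemma zero_geom D C : (forall n, Rabs D <= C * (/2)^n) -> D = 0.
Proof.
  intro H. destruct (Req_dec D 0) as [|HD]; auto. exfalso.
  assert (HD' : 0 < Rabs D) by (apply Rabs_pos_lt; auto).
  assert (HC : 0 < C) by (specialize (H 0%nat); simpl in H; lra).
  destruct (pow_lt_1_zero (/2) ltac:(rewrite Rabs_pos_eq; lra) (Rabs D / C)) as [N HN].
  apply Rdiv_lt_0_compat; auto.
  specialize (HN N (le_n N)). rewrite Rabs_pos_eq in HN by (left; apply half_pow_pos).
  apply Rmult_lt_compat_l with (r := C) in HN; auto.
  replace (C * (Rabs D / C)) with (Rabs D) in HN by (field; lra).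
  specialize (H N). lra.
Qed.

Definition hU (A w : R) (u : R) : R := sw A w u + gcl (Uf A w u).

Lemma hU_cont A w (hA : 0 <= A) x : continuity_pt (hU A w) x.
Proof.
  unfold hU. apply continuity_pt_plus. apply sw_cont.
  apply (continuity_pt_comp (Uf A w) gcl). apply Uf_cont; auto. apply gcl_cont.
Qed.

Lemma Uf_eq A w (hA : 0 <= A) t : Uf A w t = 1 + RInt (hU A w) 0 (Rabs t).
Proof.
  set (x := Rabs t). assert (Hx : 0 <= x) by apply Rabs_pos.
  apply Rminus_diag_uniq.
  apply (zero_geom _ (2 * (Kc A w * exp (2 * x)) * (1 + x))). intro n.
  replace (Uf A w t - (1 + RInt (hU A w) 0 x)) with
    ((Uf A w t - pic A w (S n) t) + (pic A w (S n) t - (1 + RInt (hU A w) 0 x))) by ring.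
  eapply Rle_trans. apply Rabs_triang.
  pose proof (Uf_approx A w hA (S n) t) as H1. fold x in H1. simpl pow in H1.
  rewrite pic_S. fold x. rewrite plus1m2. rewrite RInt_diff.
  2: apply exRI, hn_cont. 2: apply exRI; intro; apply hU_cont; auto.
  assert (H2 : Rabs (RInt (fun u => sw A w u + gcl (pic A w n u) - hU A w u) 0 x) <=
           (x - 0) * (2 * (Kc A w * exp (2 * x)) * (/2)^n)).
  { apply abs_RInt_le_const. exact Hx.
    apply exRI. intro u. apply continuity_pt_minus. apply hn_cont. apply hU_cont; auto.
    intros u Hu. unfold hU.
    replace (sw A w u + gcl (pic A w n u) - (sw A w u + gcl (Uf A w u))) with
      (gcl (pic A w n u) - gcl (Uf A w u)) by ring.
    eapply Rle_trans. apply gcl_lip. rewrite Rabs_minus_sym.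
    eapply Rle_trans. apply Uf_approx; auto.
    pose proof (Kc_pos A w hA). pose proof (half_pow_pos n).
    assert (exp (2 * Rabs u) <= exp (2 * x)) by (apply exp_mono; rewrite Rabs_pos_eq; lra).
    apply Rmult_le_compat_r. lra. nra. }
  pose proof (Kc_pos A w hA). pose proof (half_pow_pos n). pose proof (exp_pos (2*x)).
  set (P := (/2)^n) in *. set (Q := Kc A w * exp (2*x)) in *.
  assert (0 < Q) by (unfold Q; nra).
  assert (E1 : 2*Q*(/2*P) = Q*P) by field. rewrite E1 in H1.
  assert (0 < Q*P) by (apply Rmult_lt_0_compat; auto).
  replace (2 * Q * (1 + x) * P) with (2*Q*P + (x-0)*(2*Q*P)) by ring. rewrite pic_S in H1. fold x in H1. lra.
Qed.

Lemma Uf_ge1 A w (hA : 0 <= A) t : 1 <= Uf A w t.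
Proof.
  rewrite Uf_eq; auto.
  assert (0 <= RInt (hU A w) 0 (Rabs t)); [|lra].
  apply RInt_ge_0. apply Rabs_pos. apply exRI; intro; apply hU_cont; auto.
  intros u _. unfold hU. pose proof (sw_pos A w u). pose proof (gcl_pos (Uf A w u)). lra.
Qed.

Lemma Uf_der A w (hA : 0 <= A) t : 0 < t ->
  is_derive (Uf A w) t (sw A w t + / Uf A w t).
Proof.
  intro Ht.
  apply (is_derive_ext_loc (fun y => 1 + RInt (hU A w) 0 y)).
  - exists (mkposreal t Ht). intros y Hy. unfold ball in Hy; simpl in Hy.
    unfold AbsRing_ball, abs, minus, plus, opp in Hy; simpl in Hy.
    rewrite (Uf_eq A w hA y). f_equal. f_equal. rewrite Rabs_pos_eq; auto.
    apply Rabs_lt_between in Hy. lra.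
  - rewrite <- (gcl_eq (Uf A w t)) by (apply Uf_ge1; auto).
    replace (sw A w t + gcl (Uf A w t)) with (0 + hU A w t) by (unfold hU; ring).
    apply (is_derive_plus (fun _ => 1)). exact (is_derive_const (K:=R_AbsRing) (V:=R_NormedModule) 1 t).
    apply RInt_der. intro; apply hU_cont; auto.
Qed.

Lemma Uf_0 A w (hA : 0 <= A) : Uf A w 0 = 1.
Proof. rewrite Uf_eq; auto. rewrite Rabs_R0, RInt_point. simpl. unfold zero; simpl. ring. Qed.

Lemma MONO (f df : R -> R) a b : a <= b ->
  (forall x, a < x < b -> is_derive f x (df x)) ->
  (forall x, a <= x <= b -> continuity_pt f x) ->
  (forall x, a <= x <= b -> df x <= 0) -> f b <= f a.
Proof.
  intros Hab Hd Hc Hs.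
  destruct (MVT_gen f a b df) as [c [Hc1 Hc2]].
  - rewrite Rmin_left, Rmax_right by lra. auto.
  - rewrite Rmin_left, Rmax_right by lra. auto.
  - rewrite Rmin_left, Rmax_right in Hc1 by lra.
    specialize (Hs c Hc1). nra.
Qed.

Lemma SMONO (f df : R -> R) a b : a < b ->
  (forall x, a < x < b -> is_derive f x (df x)) ->
  (forall x, a <= x <= b -> continuity_pt f x) ->
  (forall x, a <= x <= b -> 0 < df x) -> f a < f b.
Proof.
  intros Hab Hd Hc Hs.
  destruct (MVT_gen f a b df) as [c [Hc1 Hc2]].
  - rewrite Rmin_left, Rmax_right by lra. auto.
  - rewrite Rmin_left, Rmax_right by lra. auto.
  - rewrite Rmin_left, Rmax_right in Hc1 by lra.
    specialize (Hs c Hc1). nra.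
Qed.

Lemma ball_R (x e y : R) : ball x e y <-> Rabs (y - x) < e.
Proof. reflexivity. Qed.

Lemma at_right_ed (f : R -> R) a l : filterlim f (at_right a) (locally l) ->
  forall eps, 0 < eps -> exists d, 0 < d /\ forall y, a < y < a + d -> Rabs (f y - l) < eps.
Proof.
  intros H eps He.
  destruct (proj1 (filterlim_locally f l) H (mkposreal eps He)) as [d Hd].
  exists d. split. apply cond_pos. intros y Hy. apply (Hd y). apply ball_R.
  rewrite Rabs_pos_eq; lra. lra.
Qed.

Lemma at_left_ed (f : R -> R) a l : filterlim f (at_left a) (locally l) ->
  forall eps, 0 < eps -> exists d, 0 < d /\ forall y, a - d < y < a -> Rabs (f y - l) < eps.
Proof.
  intros H eps He.
  destruct (proj1 (filterlim_locally f l) H (mkposreal eps He)) as [d Hd].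
  exists d. split. apply cond_pos. intros y Hy. apply (Hd y). apply ball_R.
  rewrite Rabs_left; lra. lra.
Qed.

Definition clamp (a b t : R) : R := Rmax a (Rmin b t).

Lemma clamp_in a b t : a <= b -> a <= clamp a b t <= b.
Proof. intro. unfold clamp, Rmax, Rmin. repeat destruct Rle_dec; lra. Qed.

Lemma clamp_id a b t : a <= t <= b -> clamp a b t = t.
Proof. intro. unfold clamp, Rmax, Rmin. repeat destruct Rle_dec; lra. Qed.

Lemma clamp_lo a b t : a <= b -> t <= a -> clamp a b t = a.
Proof. intros. unfold clamp, Rmax, Rmin. repeat destruct Rle_dec; lra. Qed.

Lemma clamp_hi a b t : a <= b -> b <= t -> clamp a b t = b.
Proof. intros. unfold clamp, Rmax, Rmin. repeat destruct Rle_dec; lra. Qed.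

Lemma clamp_cont (f : R -> R) a b : a < b ->
  (forall x, a < x < b -> continuity_pt f x) ->
  filterlim f (at_right a) (locally (f a)) ->
  filterlim f (at_left b) (locally (f b)) ->
  forall x, continuity_pt (fun t => f (clamp a b t)) x.
Proof.
  intros Hab Hi Hr Hl x.
  destruct (Rlt_dec x a) as [Hxa|Hxa].
  { intros eps He. exists (a - x). split. lra. intros y [_ Hy]. simpl in *.
    unfold R_dist in *. rewrite !clamp_lo by (try lra; apply Rabs_lt_between in Hy; lra).
    unfold Rminus; rewrite Rplus_opp_r, Rabs_R0; lra. }
  destruct (Rlt_dec b x) as [Hxb|Hxb].
  { intros eps He. exists (x - b). split. lra. intros y [_ Hy]. simpl in *.
    unfold R_dist in *. rewrite !clamp_hi by (try lra; apply Rabs_lt_between in Hy; lra).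
    unfold Rminus; rewrite Rplus_opp_r, Rabs_R0; lra. }
  destruct (Req_dec x a) as [Ea|Ea].
  { subst x. intros eps He. destruct (at_right_ed f a (f a) Hr eps He) as [d [Hd Hd2]].
    exists (Rmin d (b - a)). split. apply Rmin_pos; lra.
    intros y [_ Hy]. simpl in *. unfold R_dist in *. apply Rabs_lt_between in Hy.
    pose proof (Rmin_l d (b-a)). pose proof (Rmin_r d (b-a)).
    rewrite (clamp_lo a b a) by lra.
    destruct (Rle_dec y a).
    - rewrite clamp_lo by lra. unfold Rminus; rewrite Rplus_opp_r, Rabs_R0; lra.
    - rewrite clamp_id by lra. apply Hd2. lra. }
  destruct (Req_dec x b) as [Eb|Eb].
  { subst x. intros eps He. destruct (at_left_ed f b (f b) Hl eps He) as [d [Hd Hd2]].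
    exists (Rmin d (b - a)). split. apply Rmin_pos; lra.
    intros y [_ Hy]. simpl in *. unfold R_dist in *. apply Rabs_lt_between in Hy.
    pose proof (Rmin_l d (b-a)). pose proof (Rmin_r d (b-a)).
    rewrite (clamp_hi a b b) by lra.
    destruct (Rle_dec b y).
    - rewrite clamp_hi by lra. unfold Rminus; rewrite Rplus_opp_r, Rabs_R0; lra.
    - rewrite clamp_id by lra. apply Hd2. lra. }
  apply (continuity_pt_comp (clamp a b) f).
  - apply (lip_cont _ _ 1). lra. intro y. rewrite Rmult_1_l.
    unfold clamp, Rmax, Rmin. repeat destruct Rle_dec; split_Rabs; lra.
  - rewrite clamp_id by lra. apply Hi. lra.
Qed.

Lemma cont_at_right (f : R -> R) x : continuity_pt f x -> filterlim f (at_right x) (locally (f x)).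
Proof.
  intros H P HP. destruct (proj1 (continuity_pt_filterlim _ _) H P HP) as [d Hd].
  exists d. intros y Hy _. apply Hd; auto.
Qed.

Lemma cont_at_left (f : R -> R) x : continuity_pt f x -> filterlim f (at_left x) (locally (f x)).
Proof.
  intros H P HP. destruct (proj1 (continuity_pt_filterlim _ _) H P HP) as [d Hd].
  exists d. intros y Hy _. apply Hd; auto.
Qed.

Definition Vf (A w t : R) : R := / Uf A w t.

Lemma sw_w A w t : 0 <= w -> sw A w t = sqrt (A ^ 2 * t ^ 2 + w).
Proof. intro. unfold sw. rewrite Rmax_right; auto. Qed.

Lemma Vf_pos A w t : 0 <= A -> 0 < Vf A w t <= 1.
Proof.
  intro hA. unfold Vf. pose proof (Uf_ge1 A w hA t). split.
  apply Rinv_0_lt_compat; lra.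
  assert (/Uf A w t <= /1) by (apply Rinv_le_contravar; lra). rewrite Rinv_1 in H0; lra.
Qed.

Lemma Vf_0 A w : 0 <= A -> Vf A w 0 = 1.
Proof. intro. unfold Vf. rewrite Uf_0; auto. apply Rinv_1. Qed.

Lemma Vf_cont A w t : 0 <= A -> continuity_pt (Vf A w) t.
Proof.
  intro hA. unfold Vf. apply (continuity_pt_inv (Uf A w)). apply Uf_cont; auto.
  pose proof (Uf_ge1 A w hA t). lra.
Qed.

Lemma Vf_der A w t : 0 <= A -> 0 <= w -> 0 < t ->
  is_derive (Vf A w) t (jet_rhs A w t (Vf A w t)).
Proof.
  intros hA hw Ht. pose proof (Uf_ge1 A w hA t).
  assert (HD := is_derive_inv _ _ _ (Uf_der A w hA t Ht) ltac:(lra)).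
  unfold Vf. eapply is_derive_ext. intro; reflexivity.
  replace (jet_rhs A w t (/ Uf A w t)) with (- (sw A w t + / Uf A w t) / Uf A w t ^ 2).
  exact HD. unfold jet_rhs. rewrite sw_w by auto. field. lra.
Qed.

Lemma Vf_global A w : 0 <= A -> 0 <= w -> ode_sol_global A w (Vf A w) /\ Vf A w 0 = 1.
Proof.
  intros hA hw. split; [split|].
  - intros. apply Vf_der; auto.
  - apply cont_at_right. apply Vf_cont; auto.
  - apply Vf_0; auto.
Qed.

Lemma der_cont (f : R -> R) x l : is_derive f x l -> continuity_pt f x.
Proof.
  intro H. apply cont_cpt. apply (ex_derive_continuous (K:=R_AbsRing) (V:=R_NormedModule)).
  exists l; exact H.
Qed.

Lemma global_local A w T v : 0 < T -> ode_sol_global A w v -> ode_sol A w T v.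
Proof.
  intros HT [Hd Hr]. split; [|split]; auto.
  - intros t Ht. apply Hd. lra.
  - apply cont_at_left. eapply der_cont. apply Hd. lra.
Qed.

Lemma rhs_diff_bound x y s M S e :
  Rabs x <= M -> 0 < y <= 1 -> 0 <= s <= S -> e = x - y ->
  2 * e * ((- x ^ 2 * (s + x)) - (- y ^ 2 * (s + y))) <= 2 * ((M + 1) * S) * e ^ 2.
Proof.
  intros Hx Hy Hs He.
  assert (E : 2 * e * ((- x ^ 2 * (s + x)) - (- y ^ 2 * (s + y))) =
             - 2 * e^2 * ((x + y) * s + (x*x + x*y + y*y))) by (subst; ring).
  rewrite E.
  assert (P : 0 <= x*x + x*y + y*y) by nra.
  assert (Q : - (x + y) * s <= (M + 1) * S).
  { apply Rabs_le_between in Hx.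
    assert (h1 : -(x+y) <= M+1) by lra.
    assert (h2 : -(x+y) * s <= (M+1) * s) by (apply Rmult_le_compat_r; lra).
    assert (h3 : (M+1) * s <= (M+1) * S) by (apply Rmult_le_compat_l; lra).
    lra. }
  assert (0 <= e^2) by (apply pow2_ge_0).
  assert (h4 : e^2 * (-(x+y)*s) <= e^2 * ((M+1)*S)) by (apply Rmult_le_compat_l; lra).
  assert (h5 : 0 <= e^2 * (x*x + x*y + y*y)) by (apply Rmult_le_pos; lra).
  replace (- 2 * e^2 * ((x + y) * s + (x*x + x*y + y*y))) with
     (2 * (e^2 * (-(x+y)*s)) - 2*(e^2*(x*x+x*y+y*y))) by ring.
  replace (2 * ((M + 1) * S) * e ^ 2) with (2 * (e^2 * ((M+1)*S))) by ring.
  lra.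
Qed.

Lemma uniq_sol A w T v : 0 <= A -> 0 <= w -> 0 < T -> ode_sol A w T v -> v 0 = 1 ->
  forall t, 0 <= t <= T -> v t = Vf A w t.
Proof.
  intros hA hw hT [Hd [Hr Hl]] H0.
  set (vt := fun t => v (clamp 0 T t)).
  assert (Hvc : forall x, continuity_pt vt x).
  { apply clamp_cont; auto. intros x Hx. eapply der_cont. apply Hd; auto. }
  destruct (continuity_ab_maj vt 0 T ltac:(lra) (fun c _ => Hvc c)) as [Mx [HMx _]].
  destruct (continuity_ab_min vt 0 T ltac:(lra) (fun c _ => Hvc c)) as [mn [Hmn _]].
  set (M := Rmax 1 (Rmax (Rabs (vt Mx)) (Rabs (vt mn)))).
  assert (HM : forall t, Rabs (vt t) <= M).
  { intro t. assert (E : vt t = vt (clamp 0 T t)).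
    { unfold vt. rewrite (clamp_id 0 T (clamp 0 T t)); auto. apply clamp_in; lra. }
    pose proof (clamp_in 0 T t ltac:(lra)) as Hc.
    specialize (HMx _ Hc). specialize (Hmn _ Hc). rewrite <- E in HMx, Hmn.
    unfold M. pose proof (Rmax_l 1 (Rmax (Rabs (vt Mx)) (Rabs (vt mn)))).
    pose proof (Rmax_r 1 (Rmax (Rabs (vt Mx)) (Rabs (vt mn)))).
    pose proof (Rmax_l (Rabs (vt Mx)) (Rabs (vt mn))).
    pose proof (Rmax_r (Rabs (vt Mx)) (Rabs (vt mn))).
    pose proof (Rle_abs (vt Mx)). pose proof (Rabs_maj2 (vt mn)).
    apply Rabs_le. lra. }
  set (S := A * T + sqrt w).
  set (L := (M + 1) * S).
  set (e := fun t => vt t - Vf A w t).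
  set (phi := fun t => (vt t - Vf A w t) ^ 2 * exp (- 2 * L * t)).
  set (df := fun t => (2 * e t * (jet_rhs A w t (vt t) - jet_rhs A w t (Vf A w t))
                        - 2 * L * (e t) ^ 2) * exp (- 2 * L * t)).
  assert (Hvd : forall t, 0 < t < T -> is_derive vt t (jet_rhs A w t (vt t))).
  { intros t Ht. unfold vt at 2. rewrite clamp_id by lra.
    apply (is_derive_ext_loc v).
    - exists (mkposreal (Rmin t (T - t)) ltac:(apply Rmin_pos; lra)).
      intros y Hy. apply ball_R in Hy. change (Rabs (y - t) < Rmin t (T-t)) in Hy. apply Rabs_lt_between in Hy.
      pose proof (Rmin_l t (T-t)). pose proof (Rmin_r t (T-t)).
      unfold vt. rewrite clamp_id; auto. lra.
    - apply Hd; auto. }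
  assert (Hphi : forall t, 0 < t < T -> is_derive phi t (df t)).
  { intros t Ht. pose proof (Hvd t Ht) as D1. pose proof (Vf_der A w t hA hw ltac:(lra)) as D2.
    unfold phi. auto_derive.
    - split. eexists; exact D1. split. eexists; exact D2. exact I.
    - assert (E1 : Derive (fun x : R => vt x) t = jet_rhs A w t (vt t)) by (apply is_derive_unique; exact D1).
      assert (E2 : Derive (fun x : R => Vf A w x) t = jet_rhs A w t (Vf A w t)) by (apply is_derive_unique; exact D2).
      rewrite E1, E2.
      unfold df, e. ring. }
  assert (Hphic : forall t, continuity_pt phi t).
  { intro t. unfold phi. apply continuity_pt_mult.
    apply (continuity_pt_comp (fun t => vt t - Vf A w t) (fun z => z ^ 2)).
    apply continuity_pt_minus. apply Hvc. apply Vf_cont; auto. reg.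
    apply (continuity_pt_comp (fun t => - 2 * L * t) exp). reg.
    apply derivable_continuous_pt, derivable_pt_exp. }
  assert (Hdf : forall t, 0 <= t <= T -> df t <= 0).
  { intros t Ht. unfold df.
    assert (0 < exp (- 2 * L * t)) by apply exp_pos.
    assert (2 * e t * (jet_rhs A w t (vt t) - jet_rhs A w t (Vf A w t)) <= 2 * L * (e t)^2).
    { unfold jet_rhs, L. apply rhs_diff_bound; auto. apply Vf_pos; auto.
      split. apply sqrt_pos.
      pose proof (sw_le A w t hA ltac:(lra)). rewrite sw_w in H1 by auto.
      unfold S. rewrite Rmax_right in H1 by auto. nra. }
    nra. }
  intros t Ht.
  destruct (Req_dec t 0) as [->|Ht0]. rewrite Vf_0; auto.
  assert (Hp : phi t <= phi 0).
  { apply (MONO phi df 0 t). lra.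
    intros x Hx. apply Hphi. lra. intros; apply Hphic. intros x Hx. apply Hdf. lra. }
  assert (Hp0 : phi 0 = 0).
  { unfold phi, vt. rewrite clamp_id by lra. rewrite H0, Vf_0 by auto. simpl. ring. }
  rewrite Hp0 in Hp. unfold phi in Hp.
  assert (0 < exp (- 2 * L * t)) by apply exp_pos.
  assert (E2 : (vt t - Vf A w t) ^ 2 = 0).
  { assert (0 <= (vt t - Vf A w t) ^ 2) by apply pow2_ge_0. nra. }
  unfold vt in E2. rewrite clamp_id in E2 by lra. nra.
Qed.

Lemma Uf_der_pos A w t : 0 <= A -> 0 < sw A w t + / Uf A w t.
Proof.
  intro hA. pose proof (sw_pos A w t). pose proof (Uf_ge1 A w hA t).
  assert (0 < / Uf A w t) by (apply Rinv_0_lt_compat; lra). lra.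
Qed.

Lemma Uf_incr A w a b : 0 <= A -> 0 <= a < b -> Uf A w a < Uf A w b.
Proof.
  intros hA Hab. apply (SMONO _ (fun t => sw A w t + / Uf A w t)). lra.
  intros x Hx. apply Uf_der; auto; lra.
  intros. apply Uf_cont; auto.
  intros. apply Uf_der_pos; auto.
Qed.

Lemma Uf_mono A w a b : 0 <= A -> 0 <= a <= b -> Uf A w a <= Uf A w b.
Proof.
  intros hA Hab. destruct (Req_dec a b). subst; lra. left; apply Uf_incr; auto; lra.
Qed.

Lemma MONO2 (f g df dg : R -> R) a b : a <= b ->
  (forall x, a < x < b -> is_derive f x (df x)) ->
  (forall x, a < x < b -> is_derive g x (dg x)) ->
  (forall x, a <= x <= b -> continuity_pt f x) ->
  (forall x, a <= x <= b -> continuity_pt g x) ->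
  (forall x, a <= x <= b -> df x <= dg x) -> f b - f a <= g b - g a.
Proof.
  intros Hab Hf Hg Hcf Hcg Hle.
  assert (H : (fun t => f t - g t) b <= (fun t => f t - g t) a).
  { apply (MONO (fun t => f t - g t) (fun t => df t - dg t) a b); auto.
    - intros x Hx. exact (is_derive_minus f g x (df x) (dg x) (Hf x Hx) (Hg x Hx)).
    - intros. apply continuity_pt_minus; auto.
    - intros x Hx. specialize (Hle x Hx). lra. }
  simpl in H. lra.
Qed.

Lemma Uf_lower1 A w t : 0 <= A -> 0 <= t -> 1 + A * t ^ 2 / 2 <= Uf A w t.
Proof.
  intros hA Ht.
  assert (H := MONO2 (fun t => A * t ^ 2 / 2) (Uf A w) (fun t => A * t)
                 (fun t => sw A w t + / Uf A w t) 0 t Ht).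
  simpl in H. rewrite Uf_0 in H by auto.
  enough (A * t ^ 2 / 2 - A * (0 * (0 * 1)) / 2 <= Uf A w t - 1) by lra.
  apply H.
  - intros x Hx. auto_derive; auto. field.
  - intros x Hx. apply Uf_der; auto; lra.
  - intros. reg.
  - intros. apply Uf_cont; auto.
  - intros x Hx. pose proof (sw_ge A w x hA ltac:(lra)).
    pose proof (Uf_ge1 A w hA x). assert (0 < / Uf A w x) by (apply Rinv_0_lt_compat; lra). lra.
Qed.

Lemma Uf_lower2 A w t : 0 <= A -> 0 <= t -> 1 + sqrt (Rmax 0 w) * t <= Uf A w t.
Proof.
  intros hA Ht.
  assert (H := MONO2 (fun t => sqrt (Rmax 0 w) * t) (Uf A w) (fun t => sqrt (Rmax 0 w))
                 (fun t => sw A w t + / Uf A w t) 0 t Ht).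
  simpl in H. rewrite Uf_0 in H by auto.
  enough (sqrt (Rmax 0 w) * t - sqrt (Rmax 0 w) * 0 <= Uf A w t - 1) by lra.
  apply H.
  - intros x Hx. auto_derive; auto. field.
  - intros x Hx. apply Uf_der; auto; lra.
  - intros. reg.
  - intros. apply Uf_cont; auto.
  - intros x Hx. pose proof (sw_ge_sqrtw A w x).
    pose proof (Uf_ge1 A w hA x). assert (0 < / Uf A w x) by (apply Rinv_0_lt_compat; lra). lra.
Qed.

Lemma te_exists A w vn : 0 < A -> 0 < vn < 1 -> exists T, 0 < T /\ Uf A w T = / vn.
Proof.
  intros hA hv.
  assert (Hiv : 1 < / vn).
  { rewrite <- Rinv_1. apply Rinv_lt_contravar; lra. }
  set (T0 := 1 + 2 / (A * vn)).
  assert (HT0 : 2 / (A * vn) > 0) by (apply Rdiv_lt_0_compat; nra).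
  destruct (IVT (fun t => Uf A w t - / vn) 0 T0) as [z [Hz1 Hz2]].
  - intro x. apply continuity_pt_minus. apply Uf_cont; lra. apply continuity_pt_const. intros ? ?; auto.
  - unfold T0; lra.
  - simpl. rewrite Uf_0 by lra. lra.
  - simpl. pose proof (Uf_lower1 A w T0 ltac:(lra) ltac:(unfold T0; lra)).
    assert (A * T0 ^ 2 / 2 >= / vn).
    { assert (E : A * (2 / (A * vn)) = 2 * / vn) by (field; lra).
      unfold T0 in *. simpl. nra. }
    lra.
  - exists z. simpl in Hz2. split.
    + destruct (Req_dec z 0). subst. rewrite Uf_0 in Hz2 by lra. lra. lra.
    + lra.
Qed.

Definition te (A w vn : R) : R := epsilon (inhabits 0) (fun T => 0 < T /\ Uf A w T = / vn).

Lemma te_spec A w vn : 0 < A -> 0 < vn < 1 -> 0 < te A w vn /\ Uf A w (te A w vn) = / vn.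
Proof.
  intros hA hv. unfold te. apply epsilon_spec. apply te_exists; auto.
Qed.

Lemma te_unique A w vn T : 0 < A -> 0 < vn < 1 -> 0 < T -> Uf A w T = / vn -> T = te A w vn.
Proof.
  intros hA hv HT HU. destruct (te_spec A w vn hA hv) as [H1 H2].
  destruct (Rtotal_order T (te A w vn)) as [Hl|[He|Hg]]; auto.
  - pose proof (Uf_incr A w T (te A w vn) ltac:(lra) ltac:(lra)). lra.
  - pose proof (Uf_incr A w (te A w vn) T ltac:(lra) ltac:(lra)). lra.
Qed.

Lemma vsol_eq A w t : 0 <= A -> 0 <= w -> 0 <= t -> vsol A w t = Vf A w t.
Proof.
  intros hA hw ht.
  assert (Hs : ode_sol_global A w (vsol A w) /\ vsol A w 0 = 1).
  { unfold vsol. apply epsilon_spec. exists (Vf A w). apply Vf_global; auto. }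
  destruct Hs as [Hg H0].
  destruct (Req_dec t 0). subst. rewrite H0, Vf_0; auto.
  apply (uniq_sol A w t (vsol A w)); auto. lra. apply global_local; auto. lra. lra.
Qed.

Lemma t_end_eq A w vn : 0 < A -> 0 <= w -> 0 < vn < 1 -> t_end A w vn = te A w vn.
Proof.
  intros hA hw hv.
  assert (Hs : 0 < t_end A w vn /\ vsol A w (t_end A w vn) = vn).
  { unfold t_end. apply epsilon_spec. exists (te A w vn).
    destruct (te_spec A w vn hA hv) as [H1 H2]. split; auto.
    rewrite vsol_eq by lra. unfold Vf. rewrite H2. apply Rinv_inv. }
  destruct Hs as [H1 H2]. rewrite vsol_eq in H2 by lra.
  apply te_unique; auto. unfold Vf in H2. rewrite <- H2 at 2. rewrite Rinv_inv. reflexivity.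
Qed.

Lemma Uf_cmp A w1 w2 t : 0 <= A -> 0 <= w1 < w2 -> 0 < t -> Uf A w1 t < Uf A w2 t.
Proof.
  intros hA hw ht.
  set (h := fun u => / (Uf A w1 u * Uf A w2 u)).
  assert (Hh : forall x, continuity_pt h x).
  { intro x. unfold h. apply (continuity_pt_inv (fun u => Uf A w1 u * Uf A w2 u)).
    apply continuity_pt_mult; apply Uf_cont; auto.
    pose proof (Uf_ge1 A w1 hA x). pose proof (Uf_ge1 A w2 hA x). nra. }
  set (H := fun t => RInt h 0 t).
  assert (HH : forall x, is_derive H x (h x)) by (intro; apply RInt_der; auto).
  set (f := fun t => (Uf A w2 t - Uf A w1 t) * exp (H t)).
  assert (Hf : f 0 < f t).
  { apply (SMONO f (fun t => (sw A w2 t - sw A w1 t) * exp (H t)) 0 t ht).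
    - intros x Hx. pose proof (Uf_der A w1 hA x ltac:(lra)) as D1.
      pose proof (Uf_der A w2 hA x ltac:(lra)) as D2. pose proof (HH x) as D3.
      unfold f. auto_derive.
      + split. eexists; exact D2. split. eexists; exact D1. split. eexists; exact D3. exact I.
      + assert (E1 : Derive (fun x : R => Uf A w1 x) x = sw A w1 x + / Uf A w1 x) by (apply is_derive_unique; exact D1).
        assert (E2 : Derive (fun x : R => Uf A w2 x) x = sw A w2 x + / Uf A w2 x) by (apply is_derive_unique; exact D2).
        assert (E3 : Derive (fun x : R => H x) x = h x) by (apply is_derive_unique; exact D3).
        rewrite E1, E2, E3. unfold h.
        pose proof (Uf_ge1 A w1 hA x). pose proof (Uf_ge1 A w2 hA x).
        field. lra.
    - intros x _. unfold f. apply continuity_pt_mult. apply continuity_pt_minus; apply Uf_cont; auto.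
      apply (continuity_pt_comp H exp). apply der_cont with (h x). apply HH.
      apply derivable_continuous_pt, derivable_pt_exp.
    - intros x Hx. apply Rmult_lt_0_compat. 2: apply exp_pos.
      rewrite !sw_w by lra. apply Rlt_Rminus. apply sqrt_lt_1_alt.
      split. assert (0 <= A^2*x^2) by (apply Rmult_le_pos; apply pow2_ge_0). lra. lra. }
  unfold f in Hf. rewrite !Uf_0 in Hf by auto.
  replace ((1 - 1) * exp (H 0)) with 0 in Hf by ring.
  assert (0 < exp (H t)) by apply exp_pos.
  assert (0 < Uf A w2 t - Uf A w1 t) by nra. lra.
Qed.

Definition sq (w : R) : R := sqrt (Rmax 0 w).

Lemma Uf_wdiff A w w' t : 0 <= A -> 0 <= t ->
  Rabs (Uf A w t - Uf A w' t) <= Rabs (sq w - sq w') * exp (2 * t).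
Proof.
  intros hA ht. set (dl := Rabs (sq w - sq w')).
  set (psi := fun t => ((Uf A w t - Uf A w' t) ^ 2 + dl ^ 2 / 3) * exp (- 3 * t)).
  set (dpsi := fun t => (2 * (Uf A w t - Uf A w' t) *
         ((sw A w t + / Uf A w t) - (sw A w' t + / Uf A w' t))
         - 3 * ((Uf A w t - Uf A w' t) ^ 2 + dl ^ 2 / 3)) * exp (- 3 * t)).
  assert (Hp : psi t <= psi 0).
  { apply (MONO psi dpsi 0 t ht).
    - intros x Hx. pose proof (Uf_der A w hA x ltac:(lra)) as D1.
      pose proof (Uf_der A w' hA x ltac:(lra)) as D2.
      unfold psi. auto_derive.
      + split. eexists; exact D1. split. eexists; exact D2. exact I.
      + assert (E1 : Derive (fun x : R => Uf A w x) x = sw A w x + / Uf A w x) by (apply is_derive_unique; exact D1).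
        assert (E2 : Derive (fun x : R => Uf A w' x) x = sw A w' x + / Uf A w' x) by (apply is_derive_unique; exact D2).
        rewrite E1, E2. unfold dpsi. pose proof (Uf_ge1 A w hA x); pose proof (Uf_ge1 A w' hA x). field; repeat split; lra.
    - intros x _. unfold psi. apply continuity_pt_mult.
      apply (continuity_pt_comp (fun t => Uf A w t - Uf A w' t) (fun z => z ^ 2 + dl ^ 2 / 3)).
      apply continuity_pt_minus; apply Uf_cont; auto. reg.
      apply (continuity_pt_comp (fun t => - 3 * t) exp). reg.
      apply derivable_continuous_pt, derivable_pt_exp.
    - intros x Hx. unfold dpsi.
      assert (0 < exp (- 3 * x)) by apply exp_pos.
      pose proof (Uf_ge1 A w hA x). pose proof (Uf_ge1 A w' hA x).
      set (U := Uf A w x) in *. set (U' := Uf A w' x) in *.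
      set (a := sw A w x - sw A w' x).
      assert (Ha : Rabs a <= dl) by apply sw_diff.
      assert (Eb : / U - / U' = - (U - U') / (U * U')) by (field; lra).
      assert (Hb : (U - U') * (/ U - / U') <= 0).
      { rewrite Eb. unfold Rdiv. assert (0 < / (U * U')) by (apply Rinv_0_lt_compat; nra).
        assert (0 <= (U - U') * (U - U')) by apply Rle_0_sqr.
        replace ((U - U') * (- (U - U') * / (U * U'))) with (- ((U - U') * (U - U') * / (U * U'))) by ring.
        assert (0 <= (U - U') * (U - U') * / (U * U')) by (apply Rmult_le_pos; lra). lra. }
      assert (Hda : 2 * (U - U') * a <= dl ^ 2 + (U - U') ^ 2).
      { assert (2 * (U - U') * a <= 2 * Rabs (U - U') * dl).
        { assert (H3 : (U - U') * a <= Rabs ((U - U') * a)) by apply Rle_abs.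
          rewrite Rabs_mult in H3. pose proof (Rabs_pos (U - U')).
          assert (Rabs (U - U') * Rabs a <= Rabs (U - U') * dl) by (apply Rmult_le_compat_l; auto).
          lra. }
        assert (0 <= (Rabs (U - U') - dl) ^ 2) by apply pow2_ge_0.
        assert (Rabs (U - U') ^ 2 = (U - U') ^ 2) by apply pow2_abs.
        nra. }
      replace (2 * (U - U') * (sw A w x + / U - (sw A w' x + / U')))
        with (2 * (U - U') * a + 2 * ((U - U') * (/ U - / U'))) by (unfold a; ring).
      assert (2 * (U - U') * a + 2 * ((U - U') * (/ U - / U')) - 3 * ((U - U') ^ 2 + dl ^ 2 / 3) <= 0).
      { assert (0 <= (U - U') ^ 2) by apply pow2_ge_0. lra. }
      nra. }
  unfold psi in Hp. rewrite !Uf_0 in Hp by auto.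
  replace (-3 * 0) with 0 in Hp by ring. rewrite exp_0 in Hp.
  assert (Hd2 : (Uf A w t - Uf A w' t) ^ 2 <= (dl * exp (2 * t)) ^ 2).
  { assert (E : exp (- 3 * t) * exp (3 * t) = 1) by (rewrite <- exp_plus; replace (-3*t + 3*t) with 0 by ring; apply exp_0).
    assert (0 < exp (3 * t)) by apply exp_pos.
    assert (Hq : (Uf A w t - Uf A w' t) ^ 2 + dl ^ 2 / 3 <= dl ^ 2 / 3 * exp (3 * t)).
    { replace ((Uf A w t - Uf A w' t) ^ 2 + dl ^ 2 / 3) with
        (((Uf A w t - Uf A w' t) ^ 2 + dl ^ 2 / 3) * exp (- 3 * t) * exp (3 * t)) by
        (rewrite Rmult_assoc, E; ring).
      apply Rmult_le_compat_r. lra. replace ((1 - 1) ^ 2 + dl ^ 2 / 3) with (dl ^ 2 / 3) in Hp by ring. lra. }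
    assert (exp (3 * t) <= exp (2 * t) ^ 2).
    { simpl. rewrite Rmult_1_r, <- exp_plus. apply exp_mono. lra. }
    assert (0 <= dl ^ 2) by apply pow2_ge_0.
    assert (dl ^ 2 * exp (3 * t) <= dl ^ 2 * exp (2 * t) ^ 2) by (apply Rmult_le_compat_l; auto).
    rewrite Rpow_mult_distr. nra. }
  assert (0 <= dl * exp (2 * t)).
  { apply Rmult_le_pos. apply Rabs_pos. left; apply exp_pos. }
  rewrite <- (Rabs_pos_eq (dl * exp (2 * t))) by auto.
  apply Rsqr_le_abs_0. unfold Rsqr. simpl in Hd2. lra.
Qed.

Definition kf (A w t : R) : R := if Rlt_dec 0 w then A * t / sw A w t else 1.
Definition Gf (A w t : R) : R := Vf A w t * kf A w t.
Definition J (A w vn : R) : R := RInt (Gf A w) 0 (te A w vn).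

Lemma sw_pos_w A w t : 0 < w -> 0 < sw A w t.
Proof.
  intro hw. eapply Rlt_le_trans. 2: apply sw_ge_sqrtw. apply sqrt_lt_R0.
  rewrite Rmax_right; lra.
Qed.

Lemma kf_cont A w t : continuity_pt (kf A w) t.
Proof.
  unfold kf. destruct (Rlt_dec 0 w).
  - apply (continuity_pt_div (fun t => A * t) (sw A w)). reg. apply sw_cont.
    pose proof (sw_pos_w A w t r). lra.
  - apply continuity_pt_const. intros ? ?; reflexivity.
Qed.

Lemma Gf_cont A w t : 0 <= A -> continuity_pt (Gf A w) t.
Proof. intro. unfold Gf. apply continuity_pt_mult. apply Vf_cont; auto. apply kf_cont. Qed.

Lemma kf_bnd A w t : 0 < A -> 0 <= t -> 0 <= kf A w t <= 1.
Proof.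
  intros hA ht. unfold kf. destruct (Rlt_dec 0 w). 2: lra.
  pose proof (sw_pos_w A w t r). pose proof (sw_ge A w t ltac:(lra) ht).
  split. apply Rmult_le_pos. nra. left; apply Rinv_0_lt_compat; lra.
  unfold Rdiv. apply (Rmult_le_reg_r (sw A w t)); auto.
  rewrite Rmult_assoc, Rinv_l by lra. lra.
Qed.

Lemma kf_pos A w t : 0 < A -> 0 < t -> 0 < kf A w t.
Proof.
  intros hA ht. unfold kf. destruct (Rlt_dec 0 w). 2: lra.
  pose proof (sw_pos_w A w t r). apply Rdiv_lt_0_compat; nra.
Qed.

Lemma Gf_bnd A w t : 0 < A -> 0 <= t -> 0 <= Gf A w t <= 1.
Proof.
  intros hA ht. unfold Gf. pose proof (Vf_pos A w t ltac:(lra)). pose proof (kf_bnd A w t hA ht).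
  split. apply Rmult_le_pos; lra. nra.
Qed.

Lemma kf_mono A w1 w2 t : 0 < A -> 0 <= w1 <= w2 -> 0 <= t -> kf A w2 t <= kf A w1 t.
Proof.
  intros hA hw ht. destruct (Rlt_dec 0 w1) as [h1|h1].
  - unfold kf. destruct (Rlt_dec 0 w2); [|lra]. destruct (Rlt_dec 0 w1); [|lra].
    pose proof (sw_pos_w A w1 t h1). pose proof (sw_pos_w A w2 t r).
    assert (sw A w1 t <= sw A w2 t).
    { rewrite !sw_w by lra. apply sqrt_le_1_alt. lra. }
    unfold Rdiv. apply Rmult_le_compat_l. nra. apply Rinv_le_contravar; lra.
  - assert (kf A w1 t = 1) by (unfold kf; destruct (Rlt_dec 0 w1); lra).
    rewrite H. apply kf_bnd; auto.
Qed.

Lemma kf_lower A w a b t : 0 < A -> 0 < a -> a <= t <= b -> A * a / sw A w b <= kf A w t.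
Proof.
  intros hA ha ht.
  assert (Hb : 0 < sw A w b) by (pose proof (sw_ge A w b ltac:(lra) ltac:(lra)); nra).
  unfold kf. destruct (Rlt_dec 0 w).
  - pose proof (sw_pos_w A w t r).
    assert (sw A w t <= sw A w b).
    { rewrite !sw_w by lra. apply sqrt_le_1_alt.
      assert (A^2 * t^2 <= A^2*b^2) by (apply Rmult_le_compat_l; [apply pow2_ge_0| apply pow_incr; lra]). lra. }
    unfold Rdiv. apply Rmult_le_compat. nra. left; apply Rinv_0_lt_compat; lra. nra.
    apply Rinv_le_contravar; lra.
  - pose proof (sw_ge A w b ltac:(lra) ltac:(lra)).
    unfold Rdiv. apply (Rmult_le_reg_r (sw A w b)); auto.
    rewrite Rmult_assoc, Rinv_l by lra. nra.
Qed.

Lemma kf_int A w T : 0 < A -> 0 <= T -> RInt (kf A w) 0 T = (sw A w T - sq w) / A.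
Proof.
  intros hA hT. unfold kf. destruct (Rlt_dec 0 w) as [hw|hw].
  - assert (H : is_RInt (fun t => A * t / sw A w t) 0 T (minus (sw A w T / A) (sw A w 0 / A))).
    { apply (is_RInt_derive (fun t => sw A w t / A)).
      - intros x _. unfold sw. rewrite Rmax_right by lra.
        assert (0 < A ^ 2 * x ^ 2 + w) by (assert (0 <= A^2*x^2) by (apply Rmult_le_pos; apply pow2_ge_0); lra).
        auto_derive. lra. replace (A * (A * 1) * (x * (x * 1)) + w) with (A ^ 2 * x ^ 2 + w) by ring. assert (0 < sqrt (A^2*x^2+w)) by (apply sqrt_lt_R0; lra). field; repeat split; lra.
      - intros x _. apply cpt_cont. apply (continuity_pt_div (fun t => A * t) (sw A w)). reg. apply sw_cont.
        pose proof (sw_pos_w A w x hw). lra. }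
    apply (is_RInt_unique (V:=R_CompleteNormedModule)) in H. rewrite H.
    unfold minus, plus, opp. simpl. unfold sq, sw. rewrite Rmax_right by lra.
    replace (A ^ 2 * 0 ^ 2 + w) with w by ring. field. lra.
  - rewrite RInt_const. unfold scal. simpl. unfold mult. simpl.
    unfold sq, sw. rewrite Rmax_left by lra. rewrite sqrt_0.
    replace (A ^ 2 * T ^ 2 + 0) with ((A * T) * (A * T)) by ring.
    rewrite sqrt_square by nra. field. lra.
Qed.

Lemma abs_RInt_bnd (f : R -> R) a b M :
  (forall x, Rmin a b <= x <= Rmax a b -> Rabs (f x) <= M) -> ex_RInt f a b ->
  Rabs (RInt f a b) <= Rabs (b - a) * M.
Proof.
  intros H Hf. destruct (Rle_dec a b).
  - rewrite (Rabs_pos_eq (b - a)) by lra. apply abs_RInt_le_const; auto; intros t Ht; apply H; rewrite Rmin_left, Rmax_right; lra.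
  - assert (Hf' : ex_RInt f b a) by (apply (ex_RInt_swap (V:=R_CompleteNormedModule)); auto).
    rewrite <- (opp_RInt_swap (V:=R_CompleteNormedModule) f b a) by auto.
    change (Rabs (- RInt f b a) <= Rabs (b - a) * M). rewrite Rabs_Ropp.
    rewrite (Rabs_left (b - a)) by lra. replace (- (b - a)) with (a - b) by ring.
    apply abs_RInt_le_const. lra. auto.
    intros t Ht. apply H. rewrite Rmin_right, Rmax_left; lra.
Qed.

Lemma RInt_sum (f g : R -> R) a b : ex_RInt f a b -> ex_RInt g a b ->
  RInt (fun u => f u + g u) a b = RInt f a b + RInt g a b.
Proof. intros. apply (RInt_plus (V:=R_CompleteNormedModule)); auto. Qed.

Lemma RInt_neg (f : R -> R) a b : ex_RInt f a b ->
  RInt (fun u => - f u) a b = - RInt f a b.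
Proof. intro. apply (RInt_opp (V:=R_CompleteNormedModule)); auto. Qed.

Lemma Chasles (f : R -> R) a b c : ex_RInt f a b -> ex_RInt f b c ->
  RInt f a c = RInt f a b + RInt f b c.
Proof. intros. symmetry. apply (RInt_Chasles (V:=R_CompleteNormedModule)); auto. Qed.

Lemma Vf_diff A w w' t : 0 <= A -> Rabs (Vf A w t - Vf A w' t) <= Rabs (Uf A w t - Uf A w' t).
Proof.
  intro hA. unfold Vf. rewrite <- !gcl_eq by (apply Uf_ge1; auto). apply gcl_lip.
Qed.

Lemma sq_norm w : sq (Rmax 0 w) = sq w.
Proof. unfold sq. f_equal. unfold Rmax. repeat destruct Rle_dec; lra. Qed.

Lemma Uf_norm A w t : 0 <= A -> 0 <= t -> Uf A w t = Uf A (Rmax 0 w) t.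
Proof.
  intros hA ht. pose proof (Uf_wdiff A w (Rmax 0 w) t hA ht). rewrite sq_norm in H.
  unfold Rminus at 2 in H. rewrite Rplus_opp_r, Rabs_R0, Rmult_0_l in H.
  pose proof (Rabs_pos (Uf A w t - Uf A (Rmax 0 w) t)).
  assert (Rabs (Uf A w t - Uf A (Rmax 0 w) t) = 0) by lra.
  apply Rabs_eq_0 in H1. lra.
Qed.

Lemma te_norm A w vn : 0 < A -> 0 < vn < 1 -> te A w vn = te A (Rmax 0 w) vn.
Proof.
  intros hA hv. destruct (te_spec A (Rmax 0 w) vn hA hv) as [H1 H2].
  symmetry. apply te_unique; auto. rewrite Uf_norm; auto; lra.
Qed.

Lemma kf_norm A w t : kf A w t = kf A (Rmax 0 w) t.
Proof.
  unfold kf. destruct (Rlt_dec 0 w).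
  - rewrite Rmax_right by lra. destruct (Rlt_dec 0 w); lra.
  - rewrite Rmax_left by lra. destruct (Rlt_dec 0 0); lra.
Qed.

Lemma J_norm A w vn : 0 < A -> 0 < vn < 1 -> J A w vn = J A (Rmax 0 w) vn.
Proof.
  intros hA hv. unfold J. rewrite <- te_norm by auto.
  destruct (te_spec A w vn hA hv) as [H1 _].
  apply RInt_ext. intros x Hx. rewrite Rmin_left, Rmax_right in Hx by lra.
  unfold Gf, Vf. rewrite <- kf_norm, <- Uf_norm; auto; lra.
Qed.

Lemma te_cont A vn w0 : 0 < A -> 0 < vn < 1 -> forall eps, 0 < eps ->
  exists eta, 0 < eta /\ forall w, Rabs (sq w - sq w0) < eta -> Rabs (te A w vn - te A w0 vn) < eps.
Proof.
  intros hA hv eps heps.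
  destruct (te_spec A w0 vn hA hv) as [HT HU]. set (T := te A w0 vn) in *.
  set (e := Rmin eps T / 2).
  assert (He : 0 < e) by (unfold e; pose proof (Rmin_pos eps T heps HT); lra).
  assert (He2 : e < eps /\ e < T) by (unfold e; pose proof (Rmin_l eps T); pose proof (Rmin_r eps T); lra).
  set (a := T - e). set (b := T + e).
  assert (Ha : Uf A w0 a < / vn) by (rewrite <- HU; apply Uf_incr; unfold a; lra).
  assert (Hb : / vn < Uf A w0 b) by (rewrite <- HU; apply Uf_incr; unfold b; lra).
  set (g := Rmin (/ vn - Uf A w0 a) (Uf A w0 b - / vn)).
  assert (Hg : 0 < g) by (apply Rmin_pos; lra).
  exists (g / exp (2 * b)). split. apply Rdiv_lt_0_compat; auto. apply exp_pos.
  intros w Hw.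
  assert (Hd : forall t, 0 <= t <= b -> Rabs (Uf A w t - Uf A w0 t) < g).
  { intros t Ht. eapply Rle_lt_trans. apply Uf_wdiff; lra.
    assert (exp (2 * t) <= exp (2 * b)) by (apply exp_mono; lra).
    assert (0 < exp (2 * b)) by apply exp_pos.
    apply Rle_lt_trans with (Rabs (sq w - sq w0) * exp (2 * b)).
    apply Rmult_le_compat_l; auto. apply Rabs_pos.
    apply Rmult_lt_compat_r with (r := exp (2*b)) in Hw; auto.
    replace (g / exp (2 * b) * exp (2 * b)) with g in Hw by (field; lra). lra. }
  assert (Ha' : Uf A w a < / vn).
  { pose proof (Hd a ltac:(unfold a, b; lra)). apply Rabs_lt_between in H.
    pose proof (Rmin_l (/ vn - Uf A w0 a) (Uf A w0 b - / vn)). fold g in H0. lra. }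
  assert (Hb' : / vn < Uf A w b).
  { pose proof (Hd b ltac:(unfold b; lra)). apply Rabs_lt_between in H.
    pose proof (Rmin_r (/ vn - Uf A w0 a) (Uf A w0 b - / vn)). fold g in H0. lra. }
  destruct (te_spec A w vn hA hv) as [HT' HU'].
  assert (a < te A w vn).
  { destruct (Rle_dec (te A w vn) a); [|lra].
    pose proof (Uf_mono A w (te A w vn) a ltac:(lra) ltac:(lra)). lra. }
  assert (te A w vn < b).
  { destruct (Rle_dec b (te A w vn)); [|lra].
    pose proof (Uf_mono A w b (te A w vn) ltac:(lra) ltac:(unfold b in *; lra)). lra. }
  apply Rabs_lt_between. unfold a, b in *. lra.
Qed.

Lemma kpart A (V : R -> R) w1 w2 T : 0 < A -> 0 <= w1 <= w2 -> 0 <= T ->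
  (forall x, continuity_pt V x) -> (forall t, 0 <= t -> 0 < V t <= 1) ->
  0 <= RInt (fun t => V t * (kf A w1 t - kf A w2 t)) 0 T <= (sq w2 - sq w1) / A.
Proof.
  intros hA hw hT HV HVb.
  assert (Ex : ex_RInt (fun t => V t * (kf A w1 t - kf A w2 t)) 0 T).
  { apply exRI. intro. apply continuity_pt_mult; auto. apply continuity_pt_minus; apply kf_cont. }
  split.
  - apply RInt_ge_0; auto. intros x Hx. pose proof (HVb x ltac:(lra)).
    pose proof (kf_mono A w1 w2 x hA hw ltac:(lra)). apply Rmult_le_pos; lra.
  - eapply Rle_trans. apply (RInt_le _ (fun t => kf A w1 t - kf A w2 t)); auto.
    apply exRI. intro. apply continuity_pt_minus; apply kf_cont.
    intros x Hx. pose proof (HVb x ltac:(lra)).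
    pose proof (kf_mono A w1 w2 x hA hw ltac:(lra)).
    assert (V x * (kf A w1 x - kf A w2 x) <= 1 * (kf A w1 x - kf A w2 x))
      by (apply Rmult_le_compat_r; lra). lra.
    rewrite <- RInt_diff by (apply exRI; apply kf_cont).
    rewrite !kf_int by auto.
    assert (sw A w1 T <= sw A w2 T).
    { unfold sw. apply sqrt_le_1_alt. rewrite !Rmax_right by lra. lra. }
    unfold Rdiv. assert (0 < / A) by (apply Rinv_0_lt_compat; lra). nra.
Qed.

Lemma negswap (a b c : R) : a * (b - c) = - (a * (c - b)).
Proof. ring. Qed.

Lemma gsplit (a b c d : R) : a * b - c * d = (a - c) * b + c * (b - d).
Proof. ring. Qed.

Lemma kpart_abs A (V : R -> R) w w' T : 0 < A -> 0 <= w -> 0 <= w' -> 0 <= T ->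
  (forall x, continuity_pt V x) -> (forall t, 0 <= t -> 0 < V t <= 1) ->
  Rabs (RInt (fun t => V t * (kf A w' t - kf A w t)) 0 T) <= Rabs (sq w' - sq w) / A.
Proof.
  intros hA hw hw' hT HV HVb.
  destruct (Rle_dec w w').
  - pose proof (kpart A V w w' T hA ltac:(lra) hT HV HVb).
    assert (E : RInt (fun t => V t * (kf A w' t - kf A w t)) 0 T =
                - RInt (fun t => V t * (kf A w t - kf A w' t)) 0 T).
    { rewrite <- RInt_neg by (apply exRI; intro; apply continuity_pt_mult; auto; apply continuity_pt_minus; apply kf_cont).
      apply RInt_ext. intros. apply negswap. }
    rewrite E, Rabs_Ropp, Rabs_pos_eq by lra.
    assert (sq w <= sq w') by (unfold sq; apply sqrt_le_1_alt; rewrite !Rmax_right; lra).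
    rewrite (Rabs_pos_eq (sq w' - sq w)) by lra. lra.
  - pose proof (kpart A V w' w T hA ltac:(lra) hT HV HVb).
    rewrite Rabs_pos_eq by lra.
    assert (sq w' <= sq w) by (unfold sq; apply sqrt_le_1_alt; rewrite !Rmax_right; lra).
    rewrite Rabs_minus_sym, Rabs_pos_eq by lra. lra.
Qed.

Lemma J_cont A vn w0 : 0 < A -> 0 < vn < 1 -> 0 <= w0 -> forall eps, 0 < eps ->
  exists eta, 0 < eta /\ forall w, 0 <= w -> Rabs (sq w - sq w0) < eta ->
    Rabs (J A w vn - J A w0 vn) < eps.
Proof.
  intros hA hv hw0 eps heps.
  destruct (te_spec A w0 vn hA hv) as [HT HU]. set (T := te A w0 vn) in *.
  set (C := T * exp (2 * T) + / A + 1).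
  assert (HC : 0 < C).
  { unfold C. pose proof (exp_pos (2*T)). assert (0 < /A) by (apply Rinv_0_lt_compat; lra). nra. }
  destruct (te_cont A vn w0 hA hv (eps/2) ltac:(lra)) as [e1 [He1 Hte]].
  exists (Rmin e1 (eps / (2 * C))). split. apply Rmin_pos; auto. apply Rdiv_lt_0_compat; lra.
  intros w hw Hw.
  pose proof (Rmin_l e1 (eps / (2 * C))). pose proof (Rmin_r e1 (eps / (2 * C))).
  set (dl := Rabs (sq w - sq w0)) in *.
  assert (Hdl : dl * C < eps / 2).
  { apply Rlt_le_trans with (eps / (2 * C) * C). apply Rmult_lt_compat_r; lra.
    right; field; lra. }
  assert (Hde : dl < e1) by lra. pose proof (Hte w Hde) as HT'. fold T in HT'.
  destruct (te_spec A w vn hA hv) as [HT2 _]. set (T' := te A w vn) in *.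
  assert (EG : forall w, ex_RInt (Gf A w) 0 T) by (intro; apply exRI; intro; apply Gf_cont; lra).
  unfold J. fold T T'.
  rewrite (Chasles (Gf A w) 0 T T').
  2: apply EG. 2: apply exRI; intro; apply Gf_cont; lra.
  replace (RInt (Gf A w) 0 T + RInt (Gf A w) T T' - RInt (Gf A w0) 0 T) with
    (RInt (Gf A w) T T' + (RInt (Gf A w) 0 T - RInt (Gf A w0) 0 T)) by ring.
  rewrite RInt_diff by apply EG.
  assert (E1 : RInt (fun u => Gf A w u - Gf A w0 u) 0 T =
    RInt (fun u => (Vf A w u - Vf A w0 u) * kf A w u) 0 T +
    RInt (fun u => Vf A w0 u * (kf A w u - kf A w0 u)) 0 T).
  { rewrite <- RInt_sum. apply RInt_ext. intros. unfold Gf. apply gsplit.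
    apply exRI. intro. apply continuity_pt_mult. apply continuity_pt_minus; apply Vf_cont; lra. apply kf_cont.
    apply exRI. intro. apply continuity_pt_mult. apply Vf_cont; lra. apply continuity_pt_minus; apply kf_cont. }
  rewrite E1.
  assert (B1 : Rabs (RInt (Gf A w) T T') <= Rabs (T' - T) * 1).
  { apply abs_RInt_bnd. intros x Hx. assert (0 <= x).
    { pose proof (Rmin_glb_lt T T' 0). unfold Rmin in *. destruct Rle_dec; lra. }
    pose proof (Gf_bnd A w x hA H1). rewrite Rabs_pos_eq; lra.
    apply exRI; intro; apply Gf_cont; lra. }
  assert (B2 : Rabs (RInt (fun u => (Vf A w u - Vf A w0 u) * kf A w u) 0 T) <=
               Rabs (T - 0) * (dl * exp (2 * T))).
  { apply abs_RInt_bnd.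
    - intros x Hx. rewrite Rmin_left, Rmax_right in Hx by lra.
      rewrite Rabs_mult. pose proof (kf_bnd A w x hA ltac:(lra)).
      rewrite (Rabs_pos_eq (kf A w x)) by lra.
      pose proof (Vf_diff A w w0 x ltac:(lra)) as H3. pose proof (Uf_wdiff A w w0 x ltac:(lra) ltac:(lra)) as H4.
      fold dl in H4. assert (exp (2 * x) <= exp (2 * T)) by (apply exp_mono; lra).
      assert (0 <= dl) by apply Rabs_pos.
      pose proof (Rabs_pos (Vf A w x - Vf A w0 x)).
      assert (Rabs (Vf A w x - Vf A w0 x) <= dl * exp (2 * T)).
      { eapply Rle_trans. apply H3. eapply Rle_trans. apply H4. apply Rmult_le_compat_l; auto. }
      nra.
    - apply exRI. intro. apply continuity_pt_mult. apply continuity_pt_minus; apply Vf_cont; lra. apply kf_cont. }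
  assert (B3 : Rabs (RInt (fun u => Vf A w0 u * (kf A w u - kf A w0 u)) 0 T) <= dl / A).
  { apply kpart_abs; auto. lra. intro; apply Vf_cont; lra. intros. apply Vf_pos; lra. }
  rewrite Rminus_0_r in B2. rewrite (Rabs_pos_eq T) in B2 by lra.
  eapply Rle_lt_trans. apply Rabs_triang.
  eapply Rle_lt_trans. apply Rplus_le_compat_l. apply Rabs_triang.
  assert (dl * C = T * (dl * exp (2 * T)) + dl / A + dl) by (unfold C; field; lra).
  assert (0 <= dl) by apply Rabs_pos.
  lra.
Qed.

Lemma J_mono A vn w1 w2 : 0 < A -> 0 < vn < 1 -> 0 <= w1 < w2 -> J A w2 vn < J A w1 vn.
Proof.
  intros hA hv hw.
  destruct (te_spec A w1 vn hA hv) as [HT1 HU1]. destruct (te_spec A w2 vn hA hv) as [HT2 HU2].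
  set (T1 := te A w1 vn) in *. set (T2 := te A w2 vn) in *.
  assert (HT : T2 < T1).
  { destruct (Rlt_dec T2 T1); auto. exfalso.
    pose proof (Uf_mono A w2 T1 T2 ltac:(lra) ltac:(lra)).
    pose proof (Uf_cmp A w1 w2 T1 ltac:(lra) hw HT1). lra. }
  assert (EG : forall w a b, ex_RInt (Gf A w) a b) by (intros; apply exRI; intro; apply Gf_cont; lra).
  unfold J. fold T1 T2.
  rewrite (Chasles (Gf A w1) 0 T2 T1) by apply EG.
  assert (I1 : RInt (Gf A w2) 0 T2 <= RInt (Gf A w1) 0 T2).
  { apply RInt_le; auto. lra. intros x Hx. unfold Gf.
    pose proof (Uf_cmp A w1 w2 x ltac:(lra) hw ltac:(lra)).
    pose proof (Uf_ge1 A w1 ltac:(lra) x).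
    assert (Vf A w2 x <= Vf A w1 x) by (unfold Vf; apply Rinv_le_contravar; lra).
    pose proof (kf_mono A w1 w2 x hA ltac:(lra) ltac:(lra)).
    pose proof (kf_bnd A w2 x hA ltac:(lra)). pose proof (Vf_pos A w2 x ltac:(lra)).
    apply Rmult_le_compat; lra. }
  set (m := vn * (A * T2 / sw A w1 T1)).
  assert (Hsw : 0 < sw A w1 T1) by (pose proof (sw_ge A w1 T1 ltac:(lra) ltac:(lra)); nra).
  assert (Hm : 0 < m) by (unfold m; apply Rmult_lt_0_compat; [lra| apply Rdiv_lt_0_compat; nra]).
  assert (I3 : RInt (fun _ => m) T2 T1 <= RInt (Gf A w1) T2 T1).
  { apply RInt_le; auto. lra. apply exRI. intro. apply continuity_pt_const. intros ? ?; auto.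
    intros x Hx. unfold Gf, m.
    assert (Vf A w1 x >= vn).
    { pose proof (Uf_mono A w1 x T1 ltac:(lra) ltac:(lra)). pose proof (Uf_ge1 A w1 ltac:(lra) x).
      unfold Vf. rewrite <- (Rinv_inv vn). apply Rle_ge. apply Rinv_le_contravar; lra. }
    pose proof (kf_lower A w1 T2 T1 x hA HT2 ltac:(lra)).
    apply Rmult_le_compat; try lra. left. apply Rdiv_lt_0_compat; nra. }
  rewrite RInt_const in I3. change (scal (T1 - T2) m) with ((T1 - T2) * m) in I3.
  assert (0 < (T1 - T2) * m) by (apply Rmult_lt_0_compat; lra).
  lra.
Qed.

Lemma J_large A vn B : 0 < A -> 0 < vn < 1 -> 0 < B -> exists W, 0 < W /\ J A W vn < B.
Proof.
  intros hA hv hB.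
  assert (Hiv : 1 < / vn) by (rewrite <- Rinv_1; apply Rinv_lt_contravar; lra).
  set (c := / vn - 1). set (W := 1 + A * c ^ 2 / B).
  assert (HW1 : 1 < W).
  { unfold W. assert (0 < A * c ^ 2 / B) by (apply Rdiv_lt_0_compat; auto; apply Rmult_lt_0_compat; auto; apply pow_lt; unfold c; lra). lra. }
  exists W. split. lra.
  destruct (te_spec A W vn hA hv) as [HT HU]. set (T := te A W vn) in *.
  set (s := sqrt W).
  assert (Hs1 : 1 <= s) by (unfold s; rewrite <- sqrt_1; apply sqrt_le_1_alt; lra).
  assert (Hss : s * s = W) by (unfold s; apply sqrt_sqrt; lra).
  assert (Hsq : sqrt (Rmax 0 W) = s) by (unfold s; rewrite Rmax_right; lra).
  assert (HTs : s * T <= c).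
  { pose proof (Uf_lower2 A W T ltac:(lra) ltac:(lra)). rewrite Hsq in H. unfold c. lra. }
  assert (HJ : Rabs (J A W vn) <= (T - 0) * (A * T / s)).
  { unfold J. fold T. apply abs_RInt_le_const. lra. apply exRI; intro; apply Gf_cont; lra.
    intros t Ht. pose proof (Gf_bnd A W t hA ltac:(lra)).
    rewrite Rabs_pos_eq by lra. unfold Gf.
    pose proof (Vf_pos A W t ltac:(lra)). pose proof (kf_bnd A W t hA ltac:(lra)).
    assert (kf A W t <= A * T / s).
    { unfold kf. destruct (Rlt_dec 0 W); [|lra].
      pose proof (sw_ge_sqrtw A W t). rewrite Hsq in H2.
      unfold Rdiv. apply Rmult_le_compat. nra. left; apply Rinv_0_lt_compat; lra. nra.
      apply Rinv_le_contravar; lra. }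
    nra. }
  assert (A * T / s <= A * T).
  { unfold Rdiv. rewrite <- (Rmult_1_r (A * T)) at 2. apply Rmult_le_compat_l. nra.
    rewrite <- Rinv_1. apply Rinv_le_contravar; lra. }
  assert (A * (T * T) * W <= A * (c * c)).
  { assert (h : T * T * W = (s * T) * (s * T)) by (rewrite <- Hss; ring).
    assert (0 <= s * T) by nra.
    assert ((s * T) * (s * T) <= c * c) by (apply Rmult_le_compat; lra).
    rewrite Rmult_assoc, h. apply Rmult_le_compat_l; lra. }
  assert (A * (c * c) < B * W).
  { unfold W. simpl. unfold Rdiv. rewrite Rmult_plus_distr_l.
    replace (B * (A * (c * (c * 1)) * / B)) with (A * (c * c)) by (field; lra). lra. }
  assert (A * (T * T) < B) by nra.
  pose proof (Rle_abs (J A W vn)). nra.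
Qed.

Lemma J0_I0 A vn : 0 < A -> 0 < vn < 1 -> I0 A vn = J A 0 vn.
Proof.
  intros hA hv. unfold I0, J. rewrite t_end_eq by (auto; lra).
  destruct (te_spec A 0 vn hA hv) as [HT _].
  apply RInt_ext. intros x Hx. rewrite Rmin_left, Rmax_right in Hx by lra.
  unfold Gf, kf. destruct (Rlt_dec 0 0); [lra|]. rewrite Rmult_1_r.
  apply vsol_eq; lra.
Qed.

Lemma rearr (a b c d : R) : a * b * c / d = c * (a * b / d).
Proof. unfold Rdiv. ring. Qed.

Lemma bvp_int A w vn T v : 0 < A -> 0 < w -> 0 < vn < 1 -> T = te A w vn ->
  (forall t, 0 <= t <= T -> v t = Vf A w t) ->
  RInt (fun t => A * t * v t / sqrt (A ^ 2 * t ^ 2 + w)) 0 T = J A w vn.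
Proof.
  intros hA hw hv HT Hv. unfold J. rewrite <- HT.
  destruct (te_spec A w vn hA hv) as [HT0 _]. rewrite <- HT in HT0.
  apply RInt_ext. intros x Hx. rewrite Rmin_left, Rmax_right in Hx by lra.
  unfold Gf, kf. destruct (Rlt_dec 0 w); [|lra]. rewrite Hv by lra. rewrite sw_w by lra.
  apply rearr.
Qed.

Lemma sq_cont w : continuity_pt sq w.
Proof.
  unfold sq. apply (continuity_pt_comp (Rmax 0) sqrt).
  - apply (lip_cont _ _ 1). lra. intro y. rewrite Rmult_1_l.
    unfold Rmax. repeat destruct Rle_dec; split_Rabs; lra.
  - apply continuity_pt_sqrt. apply Rmax_l.
Qed.

Lemma J_cpt A vn B w0 : 0 < A -> 0 < vn < 1 -> 0 <= w0 ->
  continuity_pt (fun w => B - J A w vn) w0.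
Proof.
  intros hA hv hw0 eps heps.
  destruct (J_cont A vn w0 hA hv hw0 eps heps) as [eta [Heta HJ]].
  destruct (sq_cont w0 eta Heta) as [d [Hd Hd2]].
  exists d. split; auto. intros w [Hdx Hw]. simpl in *. unfold R_dist in *.
  rewrite (J_norm A w vn hA hv).
  replace (B - J A (Rmax 0 w) vn - (B - J A w0 vn)) with (- (J A (Rmax 0 w) vn - J A w0 vn)) by ring.
  rewrite Rabs_Ropp. apply HJ. apply Rmax_l. rewrite sq_norm.
  apply Hd2. split; auto.
Qed.

Theorem theorem4p7 (A B vn : R) :
  0 < A -> 0 < B -> 0 < vn < 1 ->
  ((exists w T (v : R -> R), bvp_sol A B vn w T v) <-> I0 A vn > B) /\
  (forall w1 T1 (v1 : R -> R) w2 T2 (v2 : R -> R),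
      bvp_sol A B vn w1 T1 v1 -> bvp_sol A B vn w2 T2 v2 ->
      w1 = w2 /\ T1 = T2 /\ (forall t, 0 <= t <= T1 -> v1 t = v2 t)).
Proof.
  intros hA hB hv.
  assert (Char : forall w T v, bvp_sol A B vn w T v ->
            0 < w /\ T = te A w vn /\ (forall t, 0 <= t <= T -> v t = Vf A w t) /\ J A w vn = B).
  { intros w T v [hw [hT [Hode [H0 [HTv Hint]]]]].
    assert (Hv : forall t, 0 <= t <= T -> v t = Vf A w t) by (apply uniq_sol; auto; lra).
    assert (HTe : T = te A w vn).
    { apply te_unique; auto.
      assert (HV : Vf A w T = vn) by (rewrite <- Hv by lra; auto).
      unfold Vf in HV. rewrite <- HV, Rinv_inv. reflexivity. }
    repeat split; auto.
    rewrite <- Hint. symmetry. apply bvp_int; auto. }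
  rewrite (J0_I0 A vn hA hv).
  split; [split|].
  - intros [w [T [v Hs]]]. destruct (Char w T v Hs) as [hw [_ [_ HJ]]].
    rewrite <- HJ. apply Rlt_gt. apply J_mono; auto. lra.
  - intro HI.
    destruct (J_large A vn B hA hv hB) as [W [HW HJW]].
    destruct (Ranalysis5.IVT_interv (fun w => B - J A w vn) 0 W) as [z [Hz1 Hz2]].
    + intros a Ha. apply J_cpt; auto; lra.
    + auto.
    + lra.
    + lra.
    + simpl in Hz2.
      assert (Hz : 0 < z).
      { destruct (Req_dec z 0). subst. lra. lra. }
      destruct (te_spec A z vn hA hv) as [HT HU].
      exists z, (te A z vn), (Vf A z).
      destruct (Vf_global A z ltac:(lra) ltac:(lra)) as [Hg H0].
      split; [auto|]. split; [auto|]. split; [apply global_local; auto|].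
      split; [auto|]. split.
      * unfold Vf. rewrite HU. apply Rinv_inv.
      * rewrite (bvp_int A z vn (te A z vn) (Vf A z)); auto; lra.
  - intros w1 T1 v1 w2 T2 v2 H1 H2.
    destruct (Char w1 T1 v1 H1) as [hw1 [HT1 [Hv1 HJ1]]].
    destruct (Char w2 T2 v2 H2) as [hw2 [HT2 [Hv2 HJ2]]].
    assert (Hw : w1 = w2).
    { destruct (Rtotal_order w1 w2) as [Hl|[He|Hg]]; auto.
      - pose proof (J_mono A vn w1 w2 hA hv ltac:(lra)). lra.
      - pose proof (J_mono A vn w2 w1 hA hv ltac:(lra)). lra. }
    subst w2. assert (T1 = T2) by congruence. subst T2.
    repeat split; auto. intros t Ht. rewrite Hv1, Hv2; auto. lra.
Qed.
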